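(* Let $G$ be a finite group acting (via a homomorphism $\Gamma_G: G \to S_A$) on a finite set $A = X \sqcup Y$ of cardinality $n$, and suppose the action is partition-preserving. Let $\Omega = \Omega_X \sqcup \Omega_Y$ be a set of colors, with weight functions $\omega_X:\Omega_X\to\mathbb{N}^+$ and $\omega_Y:\Omega_Y\to\mathbb{N}^+$ having only finitely many colors of each weight, and let $f_X$, $f_Y$ be their generating functions. Let $\Phi$ be the set of valid colorings of $A$, on which $G$ acts by $(g\varphi)(a)=\varphi(ga)$. Then, as formal power series in two variables, $$\sum_{a,b\ge 0} N_{a,b}\, x^a y^b = \tilde Z_G\big(f_X(x),\ldots,f_X(x^n), f_Y(y),\ldots, f_Y(y^n)\big),$$ where $N_{a,b}$ is the number of orbits of $G$ on $\Phi$ consisting of colorings $\varphi$ with $\sum_{c\in X}\omega_X(\varphi(c)) = a$ and $\sum_{c\in Y}\omega_Y(\varphi(c)) = b$.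
   Context: For a finite set $A$, $S_A$ is the group of bijections $A\to A$; every element of $S_A$ decomposes uniquely (up to order) into pairwise disjoint cycles. An action of $G$ on $A = X\sqcup Y$ is partition-preserving if for all $g\in G$ and $a\in A$: $ga\in X \iff a\in X$ and $ga\in Y\iff a\in Y$. For $g\in G$, $C_k^X(g)$ (resp. $C_k^Y(g)$) denotes the number of $k$-cycles (fixed points counting as 1-cycles) in the disjoint cycle decomposition of $\Gamma_G(g)$ contained in $X$ (resp. $Y$). The bipartite cycle index is $$\tilde Z_G(x_1,\ldots,x_n,y_1,\ldots,y_n) = \frac{1}{|G|}\sum_{g\in G} x_1^{C_1^X(g)}\cdots x_n^{C_n^X(g)}\, y_1^{C_1^Y(g)}\cdots y_n^{C_n^Y(g)}.$$ For a weight function $\omega:\Omega'\to\mathbb{N}$ with finite fibers, its generating function is $f_\omega(x)=\sum_{i\ge 0}|\omega^{-1}(i)|\,x^i$. A coloring $\varphi: A\to\Omega_X\sqcup\Omega_Y$ is valid if $\varphi(c)\in\Omega_X\iff c\in X$ and $\varphi(c)\in\Omega_Y\iff c\in Y$. *)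

(* Defs.v *)
From HB Require Import structures.
From mathcomp Require Import all_boot all_order all_fingroup all_algebra.
Set Implicit Arguments. Unset Strict Implicit. Unset Printing Implicit Defensive.
Import GRing.Theory.

(* ---------- Formal power series in two variables x, y, rational coefficients.
   A series F is represented by its coefficient function: F a b = [x^a y^b] F. *)
Definition fps2 := nat -> nat -> rat.
Definition fps2_zero : fps2 := fun _ _ => 0%R.
Definition fps2_one : fps2 :=
  fun a b => if (a == 0%N) && (b == 0%N) then 1%R else 0%R.
Definition fps2_add (F H : fps2) : fps2 := fun a b => (F a b + H a b)%R.
Definition fps2_mul (F H : fps2) : fps2 :=
  fun a b => (\sum_(i < a.+1) \sum_(j < b.+1) F i j * H (a - i)%N (b - j)%N)%R.
Definition fps2_scale (c : rat) (F : fps2) : fps2 := fun a b => (c * F a b)%R.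
Definition fps2_exp (F : fps2) (m : nat) : fps2 := iter m (fps2_mul F) fps2_one.

(* f(x^k) and f(y^k) for a one-variable generating function with
   coefficients f : nat -> nat  (f i = coefficient of t^i). *)
Definition substX (f : nat -> nat) (k : nat) : fps2 :=
  fun a b => if (b == 0%N) && (k %| a) then (f (a %/ k)%N)%:R%R else 0%R.
Definition substY (f : nat -> nat) (k : nat) : fps2 :=
  fun a b => if (a == 0%N) && (k %| b) then (f (b %/ k)%N)%:R%R else 0%R.

Definition cyc_count (A : finType) (s : {perm A}) (S : {set A}) (k : nat) : nat :=
  #|[set C in porbits s | (C \subset S) && (#|C| == k)]|.

(* ---------- Bipartite cycle index Z~_G(x_1..x_n, y_1..y_n), n = #|A|,
   evaluated at the series xs k (for x_k) and ys k (for y_k). *)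
Definition Ztilde (gT : finGroupType) (G : {group gT}) (A : finType)
  (Gam : gT -> {perm A}) (X Y : {set A}) (xs ys : nat -> fps2) : fps2 :=
  fps2_scale ((#|G|%:R)^-1)%R
    (\big[fps2_add/fps2_zero]_(g in G)
       \big[fps2_mul/fps2_one]_(1 <= k < #|A|.+1)
          fps2_mul (fps2_exp (xs k) (cyc_count (Gam g) X k))
                   (fps2_exp (ys k) (cyc_count (Gam g) Y k))).

Definition is_inl (T U : Type) (o : T + U) : bool :=
  if o is inl _ then true else false.
Definition is_inr (T U : Type) (o : T + U) : bool :=
  if o is inr _ then true else false.

Definition valid (A : finType) (OX OY : eqType) (X Y : {set A})
  (phi : {ffun A -> OX + OY}) : Prop :=
  forall c, ((c \in X) = is_inl (phi c)) /\ ((c \in Y) = is_inr (phi c)).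

Definition wtX (A : finType) (OX OY : eqType) (wX : OX -> nat) (X : {set A})
  (phi : {ffun A -> OX + OY}) : nat :=
  \sum_(c in X) (if phi c is inl o then wX o else 0%N).
Definition wtY (A : finType) (OX OY : eqType) (wY : OY -> nat) (Y : {set A})
  (phi : {ffun A -> OX + OY}) : nat :=
  \sum_(c in Y) (if phi c is inr o then wY o else 0%N).

Definition act_col (gT : finGroupType) (A : finType) (OX OY : eqType)
  (Gam : gT -> {perm A}) (g : gT) (phi : {ffun A -> OX + OY})
  : {ffun A -> OX + OY} := [ffun a => phi (Gam g a)].

Definition orbit_rel (gT : finGroupType) (G : {group gT}) (A : finType)
  (OX OY : eqType) (Gam : gT -> {perm A}) (phi psi : {ffun A -> OX + OY}) : Prop :=
  exists2 g, g \in G & psi = act_col Gam g phi.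

Definition num_classes (T : eqType) (P : T -> Prop) (R : T -> T -> Prop)
  (N : nat) : Prop :=
  exists s : seq T,
    [/\ size s = N,
        forall x, x \in s -> P x,
        forall x0 i j, i < size s -> j < size s -> i != j ->
           ~ R (nth x0 s i) (nth x0 s j)
      & forall x, P x -> exists2 y, y \in s & R y x].

(* Main.v *)
Require Import Defs.
From HB Require Import structures.
From mathcomp Require Import all_boot all_order all_fingroup all_algebra.
Set Implicit Arguments. Unset Strict Implicit. Unset Printing Implicit Defensive.
Import GRing.Theory.

Module PolyaAux.
Local Open Scope ring_scope.
Lemma count_w (CC : finType) (w : CC -> nat) k a : (0 < k)%N ->
  (\sum_(c : CC) ((a == (k * w c)%N) : nat))%N =
  if (k %| a)%N then #|[pred c | w c == (a %/ k)%N]| else 0%N.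
Proof.
move=> k0; case: ifP => [/dvdnP [m ->] | nd].
  rewrite mulnK // -sum1_card [RHS]big_mkcond /=; apply: eq_bigr => c _.
  by rewrite [(m * k)%N]mulnC eqn_mul2l eqn0Ngt k0 /= inE eq_sym; case: (_ == _).
apply: big1 => c _; case: eqP => // E; move: nd; rewrite E dvdn_mulr //.
Qed.

Lemma natpoly_coef (n b : nat) : ((n%:R : {poly rat})`_b) = if b == 0%N then n%:R else 0.
Proof. by rewrite coefMn coef1; case: (b == 0%N) => //; rewrite mul0rn. Qed.

Definition agree (a0 b0 : nat) (P : {poly {poly rat}}) (F : fps2) :=
  forall a b, (a <= a0)%N -> (b <= b0)%N -> F a b = P`_a`_b.
Section Subst.
Variables a0 b0 : nat.
Local Notation agree := (agree a0 b0).

Lemma agree_substX (CC : finType) (w : CC -> nat) (f : nat -> nat) k :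
  (forall i, (i <= a0)%N -> #|[pred c | w c == i]| = f i) -> (0 < k)%N ->
  agree (\sum_(c : CC) 'X^(k * w c)%N) (substX f k).
Proof.
move=> hf k0 a b ha hb; rewrite /substX !coef_sum.
under eq_bigr => c _ do rewrite coefXn natpoly_coef.
case: (b == 0%N) => /=; last by rewrite big1.
rewrite -natr_sum (eq_bigr (fun c => ((a == (k * w c)%N) : nat))) ?count_w //.
  case: ifP => // kd; rewrite hf //; exact: leq_trans (leq_div _ _) ha.
Qed.

Lemma agree_substY (CC : finType) (w : CC -> nat) (f : nat -> nat) k :
  (forall i, (i <= b0)%N -> #|[pred c | w c == i]| = f i) -> (0 < k)%N ->
  agree (\sum_(c : CC) ('X^(k * w c)%N)%:P) (substY f k).
Proof.
move=> hf k0 a b ha hb; rewrite /substY !coef_sum.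
under eq_bigr => c _ do rewrite coefC.
case: (a == 0%N) => /=; last by rewrite big1 // => c _; rewrite coef0.

under eq_bigr => c _ do rewrite coefXn.
rewrite -natr_sum (eq_bigr (fun c => ((b == (k * w c)%N) : nat))) ?count_w //.
  case: ifP => // kd; rewrite hf //; exact: leq_trans (leq_div _ _) hb.
Qed.
End Subst.

Section Agree.
Variables a0 b0 : nat.
Local Notation agree := (agree a0 b0).

Lemma agree_one : agree 1 fps2_one.
Proof.
move=> a b _ _; rewrite /fps2_one coef1; case: (a == 0%N) => /=.
  by rewrite coef1 /=; case: (b == 0%N).
by rewrite coef0.
Qed.

Lemma agree_mul P Q F H : agree P F -> agree Q H -> agree (P * Q) (fps2_mul F H).
Proof.
move=> aP aQ a b ha hb; rewrite /fps2_mul coefM coef_sum.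
apply: eq_bigr => i _; rewrite coefM; apply: eq_bigr => j _.
have hi : (i <= a0)%N by apply: leq_trans ha; rewrite -ltnS.
have hj : (j <= b0)%N by apply: leq_trans hb; rewrite -ltnS.
rewrite aP // aQ //; [exact: leq_trans (leq_subr _ _) ha | exact: leq_trans (leq_subr _ _) hb].
Qed.

Lemma agree_exp P F m : agree P F -> agree (P ^+ m) (fps2_exp F m).
Proof.
move=> aP; elim: m => [|m IH]; first exact: agree_one.
by rewrite exprS /fps2_exp iterS; apply: agree_mul.
Qed.

Lemma agree_prod (I : Type) (r : seq I) (Pr : pred I) (Ps : I -> {poly {poly rat}}) (Fs : I -> fps2) :
  (forall i, Pr i -> agree (Ps i) (Fs i)) ->
  agree (\prod_(i <- r | Pr i) Ps i) (\big[fps2_mul/fps2_one]_(i <- r | Pr i) Fs i).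
Proof.
move=> h; apply: (big_rec2 (fun P F => agree F P)); first exact: agree_one.
by move=> i F P Pi aP; apply: agree_mul => //; apply: h.
Qed.
End Agree.

Section Key.
Variables (A : finType) (X Y : {set A}) (CX CY : finType) (wX : CX -> nat) (wY : CY -> nat).
Variable s : {perm A}.
Hypothesis hX : forall a, (s a \in X) = (a \in X).
Hypothesis hY : forall a, (a \in Y) = (a \notin X).

Local Notation Col := (CX + CY)%type.
Local Notation J := (unit + Col)%type.

Lemma porbit_sub (Z : {set A}) : (forall a, (s a \in Z) = (a \in Z)) ->
  forall x, (porbit s x \subset Z) = (x \in Z).
Proof.
move=> hZ x; apply/idP/idP => [/subsetP H | xZ]; first by apply: H; exact: porbit_id.
apply/subsetP => y /porbitP [i ->]; rewrite permX; elim: i => //= i IH.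
by rewrite hZ.
Qed.

Lemma hYs a : (s a \in Y) = (a \in Y).
Proof. by rewrite !hY hX. Qed.

Definition wXc (col : Col) := if col is inl c then wX c else 0%N.
Definition wYc (col : Col) := if col is inr c then wY c else 0%N.
Definition wtx (t : {ffun A -> Col}) := (\sum_(a : A) wXc (t a))%N.
Definition wty (t : {ffun A -> Col}) := (\sum_(a : A) wYc (t a))%N.
Definition fixedb (t : {ffun A -> Col}) := [forall a, t (s a) == t a].
Definition validb (t : {ffun A -> Col}) := [forall c, (c \in X) == is_inl (t c)].
Definition FixS a0 b0 := [set t : {ffun A -> Col} |
   [&& validb t, fixedb t, wtx t == a0 & wty t == b0]].

Definition mx (C : {set A}) (j : J) := if j is inr col then (#|C| * wXc col)%N else 0%N.
Definition my (C : {set A}) (j : J) := if j is inr col then (#|C| * wYc col)%N else 0%N.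
Definition allowed (C : {set A}) (col : Col) :=
  if C \subset X then is_inl col else is_inr col.
Definition Q (C : {set A}) : pred J := fun j =>
  if C \in porbits s then (if j is inr col then allowed C col else false)
  else j == inl tt.
Definition ax (f : {ffun {set A} -> J}) := (\sum_(C : {set A}) mx C (f C))%N.
Definition ay (f : {ffun {set A} -> J}) := (\sum_(C : {set A}) my C (f C))%N.
Definition Phi (t : {ffun A -> Col}) : {ffun {set A} -> J} :=
  [ffun C => if C \in porbits s then
     (if [pick x in C] is Some x then inr (t x) else inl tt) else inl tt].

Lemma fixed_const t : fixedb t -> forall x y, y \in porbit s x -> t y = t x.
Proof.
move=> /forallP ft x y /porbitP [i ->]; rewrite permX; elim: i => //= i IH.
by rewrite (eqP (ft _)).
Qed.

Lemma porbits_in x : porbit s x \in porbits s.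
Proof. exact: imset_f. Qed.

Lemma Phi_cyc t x : fixedb t -> Phi t (porbit s x) = inr (t x).
Proof.
move=> ft; rewrite ffunE porbits_in; case: pickP => [y yC | /(_ x)].
  by congr inr; apply: fixed_const.
by rewrite porbit_id.
Qed.

Lemma wtx_Phi t : fixedb t -> wtx t = ax (Phi t).
Proof.
move=> ft; rewrite /wtx (partition_big (porbit s) (mem (porbits s))) /=;
  last by move=> a _; apply: porbits_in.
rewrite /ax [RHS](bigID (mem (porbits s))) /= [X in _ = (_ + X)%N]big1 ?addn0;
  last by move=> C /negbTE nC; rewrite ffunE nC.
apply: eq_bigr => C /imsetP [x _ ->].
rewrite (eq_big (mem (porbit s x)) (fun=> wXc (t x))) ?sum_nat_const.
- by rewrite Phi_cyc.
- by move=> a; rewrite /= eq_porbit_mem.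
by move=> a /= /eqP E; rewrite (@fixed_const t ft x a) // -E porbit_id.
Qed.

Lemma wty_Phi t : fixedb t -> wty t = ay (Phi t).
Proof.
move=> ft; rewrite /wty (partition_big (porbit s) (mem (porbits s))) /=;
  last by move=> a _; apply: porbits_in.
rewrite /ay [RHS](bigID (mem (porbits s))) /= [X in _ = (_ + X)%N]big1 ?addn0;
  last by move=> C /negbTE nC; rewrite ffunE nC.
apply: eq_bigr => C /imsetP [x _ ->].
rewrite (eq_big (mem (porbit s x)) (fun=> wYc (t x))) ?sum_nat_const.
- by rewrite Phi_cyc.
- by move=> a; rewrite /= eq_porbit_mem.
by move=> a /= /eqP E; rewrite (@fixed_const t ft x a) // -E porbit_id.
Qed.


Definition famset a0 b0 := [set f in family Q | (ax f == a0) && (ay f == b0)].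

Lemma Phi_inj : {in [pred t | fixedb t] &, injective Phi}.
Proof.
move=> t u ft fu E; apply/ffunP => a.
have := congr1 (fun f : {ffun {set A} -> J} => f (porbit s a)) E; rewrite /= !Phi_cyc //.
by case.
Qed.

Lemma allowed_cyc x col : allowed (porbit s x) col = (if x \in X then is_inl col else is_inr col).
Proof. by rewrite /allowed porbit_sub. Qed.

Lemma Phi_fam t : validb t -> fixedb t -> Phi t \in family Q.
Proof.
move=> vt ft; apply/familyP => C; rewrite unfold_in /Q.
case: ifPn => [/imsetP [x _ ->] | nC]; last by rewrite ffunE (negbTE nC).
rewrite Phi_cyc // allowed_cyc; move/forallP: vt => /(_ x) /eqP ->.
by case: (t x).
Qed.

Lemma fam_inr f a : f \in family Q -> exists col, f (porbit s a) = inr col.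
Proof.
move/familyP => /(_ (porbit s a)); rewrite unfold_in /Q porbits_in.
by case: (f _) => // col _; exists col.
Qed.

Lemma Phi_surj f (t : {ffun A -> Col}) : f \in family Q -> (forall a, f (porbit s a) = inr (t a)) ->
  [/\ fixedb t, validb t & Phi t = f].
Proof.
move=> fQ ht.
have ft : fixedb t.
  apply/forallP => a; apply/eqP.
  have := ht (s a); rewrite -(expg1 s) porbit_perm ht expg1; by case.
split => //.
  apply/forallP => c; apply/eqP.
  move/familyP: fQ => /(_ (porbit s c)); rewrite unfold_in /Q porbits_in ht allowed_cyc.
  by case: (c \in X); case: (t c).
apply/ffunP => C; case: (boolP (C \in porbits s)) => [/imsetP [x _ ->] | nC].
  by rewrite Phi_cyc // ht.
rewrite ffunE (negbTE nC); move/familyP: fQ => /(_ C); rewrite unfold_in /Q (negbTE nC).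
by move/eqP ->.
Qed.

Lemma card_FixS a0 b0 : #|FixS a0 b0| = #|famset a0 b0|.
Proof.
rewrite -(card_in_imset (f := Phi) (D := FixS a0 b0)); last first.
  move=> t u; rewrite !inE => /and4P [_ ft _ _] /and4P [_ fu _ _].
  by apply: Phi_inj.
suff -> : Phi @: FixS a0 b0 = famset a0 b0 by [].
apply/setP => f; apply/imsetP/idP.
  case=> t; rewrite inE => /and4P [vt ft /eqP wx /eqP wy] ->.
  by rewrite inE Phi_fam // -wtx_Phi // -wty_Phi // wx wy !eqxx.
rewrite inE => /andP [fQ /andP [/eqP wx /eqP wy]].
have [g hg] := @fin_all_exists A (fun _ => Col) (fun a col => f (porbit s a) = inr col)
  (fun a => fam_inr a fQ).
have hg' : forall a, f (porbit s a) = inr ([ffun a => g a] a) by move=> a; rewrite ffunE hg.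
have [ft vt Pf] := Phi_surj fQ hg'.
exists [ffun a => g a] => //.
by rewrite inE vt ft wtx_Phi // wty_Phi // Pf wx wy !eqxx.
Qed.


Definition pX k : {poly {poly rat}} := \sum_(c : CX) 'X^(k * wX c)%N.
Definition pY k : {poly {poly rat}} := \sum_(c : CY) ('X^(k * wY c)%N)%:P.
Definition M C j : {poly {poly rat}} := 'X^(mx C j) * ('X^(my C j))%:P.

Lemma prod_Q : \prod_(C : {set A}) \sum_(j | Q C j) M C j =
  (\prod_(C in porbits s | C \subset X) pX #|C|) * (\prod_(C in porbits s | C \subset Y) pY #|C|).
Proof.
rewrite (bigID (mem (porbits s))) /= [X in _ * X]big1 ?mulr1; last first.
  move=> C /negbTE nC; rewrite /Q nC big_pred1_eq /M /mx /my /=.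
  by rewrite !expr0 polyC1 mulr1.
rewrite [LHS](bigID (fun C : {set A} => C \subset X)) /=; congr (_ * _).
  apply: eq_bigr => C /andP [CP CsX].
  rewrite /Q CP big_sumType /= big_pred0 // add0r big_sumType /= /allowed CsX /=.
  rewrite [X in _ + X]big_pred0 // addr0; apply: eq_bigr => c _.
  by rewrite /M /mx /my /= muln0 expr0 polyC1 mulr1.
apply: eq_big.
  move=> C; case: (boolP (C \in porbits s)) => //= /imsetP [x _ ->].
  by rewrite porbit_sub // porbit_sub ?hY //; apply: hYs.
move=> C /andP [CP CsX].
rewrite /Q CP big_sumType /= big_pred0 // add0r big_sumType /= /allowed (negbTE CsX) /=.
rewrite [X in X + _]big_pred0 // add0r; apply: eq_bigr => c _.
by rewrite /M /mx /my /= muln0 expr0 mul1r.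
Qed.

Lemma prodM (f : {ffun {set A} -> J}) : \prod_(C : {set A}) M C (f C) = 'X^(ax f) * ('X^(ay f))%:P.
Proof.
rewrite big_split /= prodrXr; congr (_ * _).
by rewrite -(rmorph_prod (@polyC _)) prodrXr.
Qed.

Lemma coefmon p q a b : (('X^p * ('X^q)%:P : {poly {poly rat}})`_a)`_b = ((a == p) && (b == q))%:R.
Proof.
rewrite mulrC mul_polyC coefZ coefXn; case: (a == p) => /=.
  by rewrite mulr1 coefXn.
by rewrite mulr0 coef0.
Qed.

Lemma coef_fix a0 b0 :
  ((\prod_(C : {set A}) \sum_(j | Q C j) M C j)`_a0)`_b0 = #|FixS a0 b0|%:R.
Proof.
rewrite bigA_distr_big_dep !coef_sum.
under eq_bigr => f _ do rewrite prodM coefmon.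
rewrite card_FixS.
transitivity (\sum_(f in famset a0 b0) (1:rat)); last by rewrite sumr_const.
rewrite big_mkcond /= [RHS]big_mkcond; apply: eq_bigr => f _; rewrite [f \in famset _ _]inE.

case: (f \in family Q) => //=; rewrite (eq_sym a0) (eq_sym b0); by case: (_ && _).
Qed.


Lemma pred1_nat_prod (F : nat -> {poly {poly rat}}) m n : (1 <= m <= n)%N ->
  \prod_(1 <= k < n.+1 | m == k) F k = F m.
Proof.
move=> hm; rewrite big_mkcond (bigD1_seq m) /=; last first.
- exact: iota_uniq.
- by rewrite mem_index_iota ltnS.
rewrite eqxx big1 ?mulr1 // => k /negbTE; rewrite eq_sym => ->.
by [].
Qed.

Lemma group_cyc (p : nat -> {poly {poly rat}}) (Z : {set A}) :
  \prod_(C in porbits s | C \subset Z) p #|C| =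
  \prod_(1 <= k < #|A|.+1) p k ^+ cyc_count s Z k.
Proof.
transitivity (\prod_(C in porbits s | C \subset Z)
                 \prod_(1 <= k < #|A|.+1 | #|C| == k) p k).
  apply: eq_bigr => C /andP [/imsetP [x _ ->] _].
  by rewrite pred1_nat_prod // lt0n card_porbit_neq0 max_card.
rewrite (exchange_big_dep xpredT) //=; apply: eq_bigr => k _.
by rewrite /cyc_count -prodr_const; apply: eq_bigl => C; rewrite !inE andbA.
Qed.

Lemma Zterm (fX fY : nat -> nat) a0 b0 :
  (forall i, (i <= a0)%N -> #|[pred c | wX c == i]| = fX i) ->
  (forall i, (i <= b0)%N -> #|[pred c | wY c == i]| = fY i) ->
  (\big[fps2_mul/fps2_one]_(1 <= k < #|A|.+1)
      fps2_mul (fps2_exp (substX fX k) (cyc_count s X k))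
               (fps2_exp (substY fY k) (cyc_count s Y k))) a0 b0 = #|FixS a0 b0|%:R.
Proof.
move=> hfX hfY; rewrite -coef_fix prod_Q !group_cyc -big_split /=.
rewrite !big_seq.
apply: (agree_prod (a0 := a0) (b0 := b0)) => // k; rewrite mem_index_iota => /andP [k1 _].
apply: agree_mul; apply: agree_exp; [apply: agree_substX | apply: agree_substY] => //.
Qed.

End Key.

Lemma collect (O : eqType) (w : O -> nat) (f : nat -> nat) :
  (forall i, exists s : seq O, [/\ uniq s, size s = f i & forall o, (o \in s) = (w o == i)]) ->
  forall m, exists L : seq O, uniq L /\ forall o, (o \in L) = (w o < m)%N.
Proof.
move=> h; elim=> [|m [L [uL hL]]]; first by exists [::].
have [sm [usm _ hsm]] := h m.
exists (L ++ sm); split.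
  rewrite cat_uniq uL usm andbT /=; apply/hasPn => o; rewrite hsm => /eqP E.
  by rewrite hL E ltnn.
by move=> o; rewrite mem_cat hL hsm orbC -leq_eqVlt ltnS.
Qed.

Lemma card_tnth (O : eqType) (L : seq O) (P : pred O) :
  #|[pred c : 'I_(size L) | P (tnth (in_tuple L) c)]| = count P L.
Proof.
rewrite cardE /enum_mem size_filter -enumT.
transitivity (count P (map (tnth (in_tuple L)) (enum 'I_(size L)))); last by rewrite map_tnth_enum.
by rewrite count_map.
Qed.

Lemma card_weights (O : eqType) (w : O -> nat) (f : nat -> nat) (L : seq O) a0 :
  (forall i, exists s : seq O, [/\ uniq s, size s = f i & forall o, (o \in s) = (w o == i)]) ->
  uniq L -> (forall o, (o \in L) = (w o < a0.+1)%N) ->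
  forall i, (i <= a0)%N ->
  #|[pred c : 'I_(size L) | w (tnth (in_tuple L) c) == i]| = f i.
Proof.
move=> h uL hL i hi; rewrite (card_tnth L (fun o => w o == i)) -size_filter.
have [si [usi <- hsi]] := h i.
apply/perm_size/uniq_perm; [exact: filter_uniq | exact: usi |].
move=> o; rewrite mem_filter hsi hL; case: eqP => //= ->; by rewrite ltnS.
Qed.

Local Close Scope ring_scope.
Section Final.
Local Open Scope group_scope.
Variables (gT : finGroupType) (G : {group gT}) (A : finType)
  (Gam : {morphism G >-> {perm A}}) (X Y : {set A})
  (OX OY : eqType) (wX : OX -> nat) (wY : OY -> nat) (LX : seq OX) (LY : seq OY).
Hypothesis hY : forall a, (a \in Y) = (a \notin X).
Hypothesis hpres : forall g a, g \in G -> (Gam g a \in X) = (a \in X).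

Local Notation CX := 'I_(size LX).
Local Notation CY := 'I_(size LY).
Definition ixX (i : CX) : OX := tnth (in_tuple LX) i.
Definition ixY (i : CY) : OY := tnth (in_tuple LY) i.
Definition wXi (i : CX) := wX (ixX i).
Definition wYi (i : CY) := wY (ixY i).
Local Notation T := {ffun A -> CX + CY}.
Definition sumf (v : CX + CY) : OX + OY :=
  match v with inl i => inl (ixX i) | inr j => inr (ixY j) end.
Definition Fc (t : T) : {ffun A -> OX + OY} := [ffun c => sumf (t c)].
Definition toc (t : T) (g : gT) : T := [ffun c => t (Gam g^-1 c)].

Lemma toc_is_action : is_action G toc.
Proof.
split.
  move=> g t u E; apply/ffunP => c.
  have := congr1 (fun f : T => f ((Gam g^-1)^-1 c)) E; rewrite /toc !ffunE permKV.
  done.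
move=> t x y Gx Gy; apply/ffunP => c.
by rewrite /toc !ffunE invMg morphM ?groupV // permM.
Qed.

Definition to := Action toc_is_action.

Definition S a0 b0 := [set t : T | [&& validb X t, wtx wXi t == a0 & wty wYi t == b0]].

Lemma S_perm (sg : {perm A}) a0 b0 t : (forall a, (sg a \in X) = (a \in X)) ->
  t \in S a0 b0 -> [ffun c => t (sg c)] \in S a0 b0.
Proof.
move=> hs; rewrite !inE => /and3P [/forallP vt wx wy]; apply/and3P; split.
- by apply/forallP => c; rewrite ffunE -hs.
- rewrite /wtx; under eq_bigr do rewrite ffunE.
  by rewrite /wtx (reindex_inj (@perm_inj _ sg)) in wx.
- rewrite /wty; under eq_bigr do rewrite ffunE.
  by rewrite /wty (reindex_inj (@perm_inj _ sg)) in wy.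
Qed.

Lemma acts_S a0 b0 : [acts G, on S a0 b0 | to].
Proof.
apply/subsetP => g Gg; rewrite !inE Gg /=; apply/subsetP => t St.
rewrite inE /=; apply: S_perm St => a; apply: hpres; by rewrite groupV.
Qed.

Lemma fix_eq g a0 b0 : g \in G ->
  'Fix_(S a0 b0 | to)[g] = FixS X wXi wYi (Gam g) a0 b0.
Proof.
move=> Gg; apply/setP => t; rewrite in_setI; apply/andP/idP.
  case => St /afix1P /= E; move: St; rewrite inE => /and3P [vt wx wy].
  rewrite inE.
  apply/and4P; split => //; apply/forallP => a; apply/eqP.
  have := congr1 (fun f : T => f (Gam g a)) E; rewrite /toc ffunE morphV // permK.
  by move=> ->.
rewrite inE => /and4P [vt ft wx wy]; rewrite inE vt wx wy; split => //.
apply/afix1P; apply/ffunP => c; rewrite /= /toc ffunE morphV //.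
have := (forallP ft) ((Gam g)^-1 c); rewrite permKV => /eqP ->. done.
Qed.


Definition canon (t : T) : T := odflt t [pick u in orbit to G t].

Lemma canon_in t : canon t \in orbit to G t.
Proof.
rewrite /canon; case: pickP => [u //= | /(_ t)].
by rewrite /= orbit_refl.
Qed.

Lemma orbit_canon t : orbit to G (canon t) = orbit to G t.
Proof. exact/(orbit_in_eqP (subxx G))/canon_in. Qed.

Lemma canon_eq t u : orbit to G t = orbit to G u -> canon t = canon u.
Proof.
move=> E; rewrite /canon E; case: pickP => [v // | /(_ u)].
by rewrite /= orbit_refl.
Qed.

Lemma canon_idem t : canon (canon t) = canon t.
Proof. by apply: canon_eq; apply: orbit_canon. Qed.

Hypotheses (uLX : uniq LX) (uLY : uniq LY).

Lemma sumf_inj : injective sumf.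
Proof.
have iX : injective ixX by apply/tuple_uniqP.
have iY : injective ixY by apply/tuple_uniqP.
by case=> [i|i] [j|j] //= [] => [/iX|/iY] ->.
Qed.

Lemma Fc_inj : injective Fc.
Proof.
move=> t u E; apply/ffunP => c; apply: sumf_inj.
by have := congr1 (fun f : {ffun A -> OX + OY} => f c) E; rewrite /Fc !ffunE.
Qed.

Lemma Fc_act t g : g \in G -> Fc (to t g^-1) = act_col Gam g (Fc t).
Proof. by move=> Gg; apply/ffunP => c; rewrite /act_col /Fc /= /toc !ffunE invgK. Qed.

Lemma is_inl_sumf v : is_inl (sumf v) = is_inl v.
Proof. by case: v. Qed.
Lemma is_inr_sumf v : is_inr (sumf v) = is_inr v.
Proof. by case: v. Qed.

Lemma valid_Fc t : valid X Y (Fc t) <-> validb X t.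
Proof.
split.
  move=> v; apply/forallP => c; have [h1 _] := v c; rewrite ffunE in h1.
  by rewrite h1; case: (t c).
move=> /forallP v c; rewrite ffunE hY; have := v c.
by case: (t c) => x /= /eqP ->.
Qed.

Lemma wtX_Fc t : validb X t -> wtX wX X (Fc t) = wtx wXi t.
Proof.
move=> /forallP vt.
rewrite /wtX /wtx [RHS](bigID (mem X)) /= [X in _ = (_ + X)%N]big1 ?addn0.
  by apply: eq_bigr => c _; rewrite ffunE; case: (t c).
move=> c cX; have := vt c; rewrite (negbTE cX) eq_sym; by case: (t c).
Qed.

Lemma wtY_Fc t : validb X t -> wtY wY Y (Fc t) = wty wYi t.
Proof.
move=> /forallP vt.
rewrite /wtY /wty [RHS](bigID (mem Y)) /= [X in _ = (_ + X)%N]big1 ?addn0.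
  by apply: eq_bigr => c _; rewrite ffunE; case: (t c).
move=> c cY; have := vt c; rewrite hY negbK in cY; rewrite cY eq_sym; by case: (t c).
Qed.

Variables a0 b0 : nat.
Hypothesis hLX : forall o, (o \in LX) = (wX o < a0.+1)%N.
Hypothesis hLY : forall o, (o \in LY) = (wY o < b0.+1)%N.

Definition Pc (phi : {ffun A -> OX + OY}) :=
  [/\ valid X Y phi, wtX wX X phi = a0 & wtY wY Y phi = b0].

Lemma PF t : t \in S a0 b0 -> Pc (Fc t).
Proof.
rewrite inE => /and3P [vt /eqP wx /eqP wy]; split.
- exact/valid_Fc.
- by rewrite wtX_Fc.
- by rewrite wtY_Fc.
Qed.

Lemma Fsurj phi : Pc phi -> exists2 t, t \in S a0 b0 & Fc t = phi.
Proof.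
case=> vphi wx wy.
have h : forall c, exists v : CX + CY, sumf v = phi c.
  move=> c; case E: (phi c) => [o|o].
  - have cX : c \in X by rewrite (proj1 (vphi c)) E.
    have oL : o \in LX.
      rewrite hLX ltnS -wx /wtX (bigD1 c) //= E; exact: leq_addr.
    have hi : (index o LX < size LX)%N by rewrite index_mem.
    exists (inl (Ordinal hi)); rewrite /= /ixX (tnth_nth o) /= nth_index //.
  - have cY : c \in Y by rewrite (proj2 (vphi c)) E.
    have oL : o \in LY.
      rewrite hLY ltnS -wy /wtY (bigD1 c) //= E; exact: leq_addr.
    have hi : (index o LY < size LY)%N by rewrite index_mem.
    exists (inr (Ordinal hi)); rewrite /= /ixY (tnth_nth o) /= nth_index //.
have [g hg] := @fin_all_exists A (fun _ => (CX + CY)%type) (fun c v => sumf v = phi c) h.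
have Ft : Fc [ffun c => g c] = phi by apply/ffunP => c; rewrite !ffunE hg.
exists [ffun c => g c] => //.
have vt : validb X [ffun c => g c] by apply/valid_Fc; rewrite Ft.
by rewrite inE vt -wtX_Fc // -wtY_Fc // Ft wx wy !eqxx.
Qed.

Definition R := [set canon t | t in S a0 b0].

Lemma canon_S t : t \in S a0 b0 -> canon t \in S a0 b0.
Proof.
move=> St; have /orbitP [g Gg <-] := canon_in t.
by have := acts_act (acts_S a0 b0) Gg t; rewrite St.
Qed.

Lemma card_R : #|R| = #|orbit to G @: S a0 b0|.
Proof.
have -> : orbit to G @: S a0 b0 = orbit to G @: R.
  apply/setP => O; apply/imsetP/imsetP => [[t St ->] | [r /imsetP [t St ->] ->]].
    by exists (canon t); [apply: imset_f | rewrite orbit_canon].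
  by exists t => //; rewrite orbit_canon.
rewrite card_in_imset // => r1 r2 /imsetP [t1 _ ->] /imsetP [t2 _ ->] E.
by rewrite -(canon_idem t1) -(canon_idem t2); apply: canon_eq.
Qed.

Lemma classes : num_classes Pc (orbit_rel G Gam) #|R|.
Proof.
exists (map Fc (enum R)); split.
- by rewrite size_map -cardE.
- move=> x /mapP [r]; rewrite mem_enum => /imsetP [t St ->] ->.
  exact/PF/canon_S.
- move=> x0 i j; rewrite size_map => hi hj nij [g Gg E].
  have [r0 _] : exists r0 : T, true by move: hi; case: (enum R) => [|r0 rs] // _; exists r0.
  rewrite !(nth_map r0) // -Fc_act // in E; move/Fc_inj: E => E.
  have ri : nth r0 (enum R) i \in R by rewrite -mem_enum mem_nth.
  have rj : nth r0 (enum R) j \in R by rewrite -mem_enum mem_nth.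
  have : nth r0 (enum R) j \in orbit to G (nth r0 (enum R) i).
    by rewrite E mem_orbit // groupV.
  move/(orbit_in_eqP (subxx G))/canon_eq => Ec.
  have Hi : canon (nth r0 (enum R) i) = nth r0 (enum R) i.
    by case/imsetP: ri => t _ ->; rewrite canon_idem.
  have Hj : canon (nth r0 (enum R) j) = nth r0 (enum R) j.
    by case/imsetP: rj => t _ ->; rewrite canon_idem.
  rewrite Hi Hj in Ec.
  move/negP: nij; apply; rewrite -(nth_uniq r0 hi hj (enum_uniq (mem R))).
  by rewrite Ec.
- move=> x /Fsurj [t St <-]; exists (Fc (canon t)).
    by apply: map_f; rewrite mem_enum; apply: imset_f.
  have /orbitP [h Gh Eh] := canon_in t.
  by exists h => //; rewrite -Fc_act // -Eh (actKin to Gh).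
Qed.


Lemma Zval (fX fY : nat -> nat) :
  (forall i, (i <= a0)%N -> #|[pred c | wXi c == i]| = fX i) ->
  (forall i, (i <= b0)%N -> #|[pred c | wYi c == i]| = fY i) ->
  Ztilde G Gam X Y (substX fX) (substY fY) a0 b0 = ((#|orbit to G @: S a0 b0|)%:R)%R.
Proof.
move=> hfX hfY; rewrite /Ztilde /fps2_scale.
rewrite (big_morph (fun F : fps2 => F a0 b0) (id1 := 0%R) (op1 := +%R)) //.
under eq_bigr => g Gg do
  rewrite (Zterm (s := Gam g) (fun a => hpres a Gg) hY hfX hfY) -(fix_eq a0 b0 Gg).
rewrite -natr_sum Frobenius_Cauchy ?acts_S // natrM mulrCA mulVf ?mulr1 //.
by rewrite Num.Theory.pnatr_eq0 -lt0n cardG_gt0.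
Qed.

End Final.

End PolyaAux.
Import PolyaAux.

Theorem mainTheorem2 (gT : finGroupType) (G : {group gT}) (A : finType)
  (Gam : {morphism G >-> {perm A}}) (X Y : {set A})
  (OX OY : eqType) (wX : OX -> nat) (wY : OY -> nat) (fX fY : nat -> nat) :
  X :&: Y = set0 -> X :|: Y = setT ->
  (forall g a, g \in G ->
     ((Gam g a \in X) = (a \in X)) /\ ((Gam g a \in Y) = (a \in Y))) ->
  (forall o, 0 < wX o) -> (forall o, 0 < wY o) ->
  (forall i, exists s : seq OX,
     [/\ uniq s, size s = fX i & forall o, (o \in s) = (wX o == i)]) ->
  (forall i, exists s : seq OY,
     [/\ uniq s, size s = fY i & forall o, (o \in s) = (wY o == i)]) ->
  forall a b, exists N : nat,
    num_classes
      (fun phi : {ffun A -> OX + OY} =>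
         [/\ valid X Y phi, wtX wX X phi = a & wtY wY Y phi = b])
      (orbit_rel G Gam) N
    /\ (N%:R)%R = Ztilde G Gam X Y (substX fX) (substY fY) a b.
Proof.
move=> hXY hU hpres0 _ _ hfX0 hfY0 a b.
have hY : forall c, (c \in Y) = (c \notin X).
  move=> c; have := congr1 (fun S : {set A} => c \in S) hU; have := congr1 (fun S : {set A} => c \in S) hXY.
  by rewrite !inE; case: (c \in X); case: (c \in Y).
have hpres : forall g c, g \in G -> (Gam g c \in X) = (c \in X).
  by move=> g c Gg; case: (hpres0 g c Gg).
have [LX [uLX hLX]] := collect hfX0 a.+1.
have [LY [uLY hLY]] := collect hfY0 b.+1.
exists #|R Gam X wX wY LX LY a b|; split.
  exact: (classes hY hpres uLX uLY hLX hLY).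
by rewrite card_R (Zval hY hpres (card_weights hfX0 uLX hLX) (card_weights hfY0 uLY hLY)).
Qed.
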